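(* Let $q\ge5$ be odd with $q\equiv\xi\pmod3$. (i) If $\xi=-1$, then $V_2=1$ and $V_1=(q-1)/2$. (ii) If $\xi=1$ and $2$ is a non-cube in $\mathbb F_q$, then $V_2=0$ and $V_1=\mathcal N_q$. (iii) If $\xi=1$ and $2$ is a cube in $\mathbb F_q$, then $V_2=3$ and $V_1=\mathcal N_q$.
   Context: For $m\in\{0,1,2,3\}$, $V_m$ is the number of $\beta\in\mathbb F_q$ such that the cubic equation $t^3-3\beta t^2-1=0$ has exactly $m$ distinct solutions $t\in\mathbb F_q$. $\mathcal N_q=\#\{\beta\in\mathbb F_q: 1+4\beta^3\text{ is a non-square in }\mathbb F_q\}$. *)

(* Defs.v *)
From mathcomp Require Import all_boot all_order all_algebra all_field.
Set Implicit Arguments. Unset Strict Implicit. Unset Printing Implicit Defensive.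
Import GRing.Theory.
Local Open Scope ring_scope.

Definition nsol (F : finFieldType) (beta : F) : nat :=
  #|[set t : F | t ^+ 3 - 3%:R * beta * t ^+ 2 - 1 == 0]|.

Definition Vcount (F : finFieldType) (m : nat) : nat :=
  #|[set beta : F | nsol beta == m]|.

Definition is_square (F : finFieldType) (x : F) : bool := [exists y : F, y ^+ 2 == x].
Definition is_cube (F : finFieldType) (x : F) : bool := [exists y : F, y ^+ 3 == x].

Definition Ncount (F : finFieldType) : nat :=
  #|[set beta : F | ~~ is_square (1 + 4%:R * beta ^+ 3)]|.

(* Main.v *)
Require Import Defs.
From mathcomp Require Import all_boot all_order all_algebra all_field all_fingroup.
From mathcomp Require Import ring zify.
Import GRing.Theory.
Local Open Scope ring_scope.

Lemma char_dvd (F : finFieldType) (p : nat) : prime p -> p%:R == 0 :> F -> (p %| #|F|)%N.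
Proof.
move=> pp p0.
have pc : p \in [pchar F] by rewrite inE pp p0.
have := card_pprimeChar pc.
set n := logn _ _ => /= E.
have : #|pPrimeCharType pc| = #|F| by [].
move=> E2; rewrite -E2 E.
case: n E => [|n] E; last by rewrite expnS dvdn_mulr.
exfalso. have := finNzRing_gt1 F. by rewrite -E2 E.
Qed.

Section S.
Variable F : finFieldType.
Hypothesis h2 : (2%:R : F) != 0.
Hypothesis h3 : (3%:R : F) != 0.

Definition fb (b x : F) := x ^+ 3 - 3%:R * b * x ^+ 2 - 1.
Definition roots (b : F) := [set x : F | fb b x == 0].
Lemma nsolE b : nsol b = #|roots b|. Proof. by []. Qed.

Lemma sqroots (D : F) : #|[set y : F | y ^+ 2 == D]| =
  if is_square D then (if D == 0 then 1%N else 2%N) else 0%N.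
Proof.
case: ifP => [/existsP [d /eqP <-]|ns].
  have -> : [set y : F | y ^+ 2 == d ^+ 2] = [set d; -d].
    by apply/setP => y; rewrite !inE eqf_sqr.
  rewrite cards2 sqrf_eq0.
  case: (eqVneq d 0) => [->|dn0]; first by rewrite oppr0 eqxx.
  suff : d != - d by move=> ->.
  apply: contra dn0 => /eqP e.
  have : 2%:R * d == 0 by rewrite mulr_natl mulr2n {1}e addNr.
  by rewrite mulf_eq0 (negPf h2).
apply/eqP; rewrite cards_eq0; apply/eqP/setP => y; rewrite !inE.
apply/negP => e; move: ns; rewrite /is_square.
by have -> : [exists y0, y0 ^+ 2 == D] by apply/existsP; exists y.
Qed.

Lemma h4 : (4%:R : F) != 0.
Proof. by rewrite (_ : 4%:R = 2%:R * 2%:R) ?mulf_neq0 // -natrM. Qed.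
Lemma h27 : (27%:R : F) != 0.
Proof. by rewrite (_ : 27%:R = 3%:R * 3%:R * 3%:R) ?mulf_neq0 // -!natrM. Qed.

Lemma fb_root {b t} : fb b t = 0 -> 3%:R * b * t ^+ 2 = t ^+ 3 - 1.
Proof.
move=> h; apply/eqP; rewrite -subr_eq0; apply/eqP.
by rewrite -[RHS]oppr0 -h /fb; ring.
Qed.

Lemma fb_t0 {b t} : fb b t = 0 -> t != 0.
Proof.
move=> h; apply/negP => /eqP t0; move: h; rewrite t0 /fb.
rewrite expr0n /= expr0n /= mulr0 !subr0 sub0r => /eqP; rewrite oppr_eq0.
by rewrite oner_eq0.
Qed.

Lemma roots_dec {b t} : fb b t = 0 ->
  roots b = t |: [set x | (2%:R * t ^+ 2 * x + 1) ^+ 2 == 1 - 4%:R * t ^+ 3].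
Proof.
move=> ht; have E := fb_root ht; have t0 := fb_t0 ht.
apply/setP => x; rewrite !inE.
have key : 4%:R * t ^+ 4 * fb b x =
   (x - t) * ((2%:R * t ^+ 2 * x + 1) ^+ 2 - (1 - 4%:R * t ^+ 3)).
  transitivity (4%:R * t ^+ 4 * x ^+ 3 - 4%:R * t ^+ 2 * x ^+ 2 * (3%:R * b * t ^+ 2)
     - 4%:R * t ^+ 4); first by rewrite /fb; ring.
  by rewrite E; ring.
have nz : 4%:R * t ^+ 4 != 0 :> F by rewrite mulf_neq0 ?h4 ?expf_neq0.
rewrite -(mulrI_eq0 _ (mulfI nz)) key mulf_eq0 subr_eq0 subr_eq0.
done.
Qed.

Lemma perroot {b t} : fb b t = 0 ->
  ((nsol b == 1%N) = ~~ is_square (1 - 4%:R * t ^+ 3)) /\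
  ((nsol b == 2%N) = (1 + 4%:R * b ^+ 3 == 0)).
Proof.
move=> ht; have E := fb_root ht; have t0 := fb_t0 ht.
rewrite nsolE (roots_dec ht) cardsU1.
set D := 1 - 4%:R * t ^+ 3.
set S := [set x | _].
have a0 : 2%:R * t ^+ 2 != 0 :> F by rewrite mulf_neq0 ?expf_neq0.
have -> : #|S| = #|[set y : F | y ^+ 2 == D]|.
  rewrite -(card_preimset [set y : F | y ^+ 2 == D] (f := fun x => 2%:R * t ^+ 2 * x + 1)); last first.
    by move=> x y /addIr /(mulfI a0).
  by apply: eq_card => x; rewrite !inE.
rewrite sqroots.
set u := t ^+ 3.
have tS : (t \in S) = (u + 2%:R == 0).
  rewrite inE.
  have -> : (2%:R * t ^+ 2 * t + 1) ^+ 2 = D + 4%:R * u * (u + 2%:R) by rewrite /D /u; ring.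
  rewrite -subr_eq0 addrC addKr !mulf_eq0 (negPf h4) /u (negPf t0).
  done.
rewrite tS.
have hA : u + 2%:R == 0 -> D = 3%:R ^+ 2.
  move=> /eqP h; have -> : D = 1 - 4%:R * (u + 2%:R) + 8%:R by rewrite /D /u; ring.
  by rewrite h mulr0 subr0; ring.
have hC : (1 + 4%:R * b ^+ 3 == 0) = (u + 2%:R == 0) || (D == 0).
  have nz : 27%:R * t ^+ 6 != 0 :> F by rewrite mulf_neq0 ?h27 ?expf_neq0.
  rewrite -(mulrI_eq0 _ (mulfI nz)).
  have -> : 27%:R * t ^+ 6 * (1 + 4%:R * b ^+ 3) = - ((u + 2%:R) ^+ 2 * D).
    transitivity (27%:R * t ^+ 6 + 4%:R * (3%:R * b * t ^+ 2) ^+ 3); first by ring.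
    by rewrite E /D /u; ring.
  by rewrite oppr_eq0 mulf_eq0 sqrf_eq0.
rewrite hC.
have h9 : u + 2%:R == 0 -> D != 0.
  by move=> /hA ->; rewrite sqrf_eq0.
have h9s : u + 2%:R == 0 -> is_square D.
  by move=> /hA ->; apply/existsP; exists 3%:R.
have hD0 : D == 0 -> is_square D.
  by move=> /eqP ->; apply/existsP; exists 0; rewrite expr0n.
case: (boolP (u + 2%:R == 0)) => hu /=.
  by rewrite h9s // (negPf (h9 hu)).
case: (boolP (is_square D)) => hs /=.
  by case: (D == 0).
by case: (boolP (D == 0)) => // /hD0; rewrite (negPf hs).
Qed.

Lemma nsol2 (b : F) : (nsol b == 2%N) = (1 + 4%:R * b ^+ 3 == 0).
Proof.
case: (set_0Vmem (roots b)) => [e|[t]].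
  rewrite nsolE e cards0 /=; apply/esym/negP => /eqP h.
  have : (2%:R * b) \in roots b.
    by rewrite inE; apply/eqP; rewrite -[RHS]oppr0 -h /fb; ring.
  by rewrite e inE.
by rewrite inE => /eqP ht; exact: (perroot ht).2.
Qed.

Lemma V2E : Vcount F 2 = #|[set b : F | 1 + 4%:R * b ^+ 3 == 0]|.
Proof. by apply: eq_card => b; rewrite !inE nsol2. Qed.

Definition phi (t : F) := (t ^+ 3 - 1) / (3%:R * t ^+ 2).

Lemma V1E : Vcount F 1 = Ncount F.
Proof.
pose A := [set t : F | ~~ is_square (1 - 4%:R * t ^+ 3)].
have At0 t : t \in A -> t != 0.
  rewrite inE; apply: contraNneq => ->; apply/existsP; exists 1.
  by rewrite expr0n /= mulr0 subr0 expr1n.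
have Aroot t : t \in A -> fb (phi t) t = 0.
  move=> /At0 t0; rewrite /fb /phi; field.
  by rewrite t0 h3.
have e1 : [set b | nsol b == 1%N] = phi @: A.
  apply/setP => b; rewrite inE; apply/idP/idP.
    move=> hb; case: (set_0Vmem (roots b)) => [e|[t]].
      by move: hb; rewrite nsolE e cards0.
    rewrite inE => /eqP ht; apply/imsetP; exists t.
      by rewrite inE -(perroot ht).1.
    have E := fb_root ht; have t0 := fb_t0 ht.
    rewrite /phi -E; field; by rewrite t0 h3.
  case/imsetP => t tA ->.
  by rewrite (perroot (Aroot t tA)).1; rewrite inE in tA.
have inj : {in A &, injective phi}.
  move=> t1 t2 k1 k2 e.
  have r1 := Aroot t1 k1; have r2 := Aroot t2 k2; rewrite -e in r2.
  have : nsol (phi t1) == 1%N by rewrite (perroot r1).1; rewrite inE in k1.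
  rewrite nsolE => /cards1P [x ex].
  have : t1 \in roots (phi t1) by rewrite inE r1.
  have : t2 \in roots (phi t1) by rewrite inE r2.
  by rewrite ex !inE => /eqP -> /eqP ->.
rewrite /Vcount e1 (card_in_imset inj) /Ncount.
rewrite -(card_preimset _ (@oppr_inj F)).
apply: eq_card => t; rewrite !inE.
by have -> : 1 - 4%:R * (- t) ^+ 3 = 1 + 4%:R * t ^+ 3 :> F by ring.
Qed.

Lemma cube_inj : (#|F| %% 3 = 2)%N -> injective (fun x : F => x ^+ 3).
Proof.
move=> hq x y /= e.
case: (eqVneq y 0) => [y0|y0].
  by move: e; rewrite y0 expr0n /= => /eqP; rewrite expf_eq0 /= => /eqP.
have x0 : x != 0.
  apply: contra_neq y0 => x0.
  have : y ^+ 3 == 0 by rewrite -e x0 expr0n.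
  by rewrite expf_eq0 => /andP[_ /eqP].
pose z := x / y.
have z3 : z ^+ 3 = 1 by rewrite /z exprMn e exprVn divff // expf_neq0.
have z0 : z != 0 by rewrite /z mulf_neq0 ?invr_eq0.
have zq := expf_card z.
rewrite (divn_eq #|F| 3) hq exprD mulnC exprM z3 expr1n mul1r in zq.
have : z * (z - 1) == 0 by rewrite mulrBr mulr1 -expr2 zq subrr.
rewrite mulf_eq0 (negPf z0) subr_eq0 /z => /eqP h.
by rewrite -[x](divfK y0) h mul1r.
Qed.

Lemma nsq : (#|[set w : F | ~~ is_square w]| = (#|F| - 1) %/ 2)%N.
Proof.
have key : (#|F| + 1 = 2 * #|[set w : F | is_square w]|)%N.
  have e1 : #|F| = (\sum_(w : F)
       (if is_square w then (if w == 0%R then 1%N else 2%N) else 0%N))%N.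
    rewrite -sum1_card (partition_big (fun y : F => y ^+ 2) predT) //=.
    apply: eq_bigr => w _; rewrite -sqroots -sum1_card.
    by apply: eq_bigl => y; rewrite inE.
  have -> : (2 * #|[set w : F | is_square w]| =
            \sum_(w : F) (if is_square w then 2 else 0))%N.
    rewrite -big_mkcond /= sum_nat_const mulnC; congr (_ * _)%N.
    by apply: eq_card => w; rewrite inE.
  have s0 : is_square (0 : F) by apply/existsP; exists 0; rewrite expr0n.
  rewrite e1 (bigD1 0) //= [in RHS](bigD1 0) //= s0 eqxx.
  rewrite (eq_bigr (fun w => if is_square w then 2%N else 0%N)); first by lia.
  by move=> w /negPf ->; case: ifP.
have e2 : (#|[set w : F | is_square w]| + #|[set w : F | ~~ is_square w]| = #|F|)%N.
  rewrite -(cardsC [set w : F | is_square w]); congr (_ + _)%N.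
  by apply: eq_card => w; rewrite !inE.
lia.
Qed.

Lemma case2 : (#|F| %% 3 = 2)%N -> Vcount F 2 = 1%N /\ Vcount F 1 = ((#|F| - 1) %/ 2)%N.
Proof.
move=> hq; have ci := cube_inj hq.
split.
  rewrite V2E.
  have -> : [set b : F | 1 + 4%:R * b ^+ 3 == 0] =
      (fun x : F => x ^+ 3) @^-1: [set (- 4%:R^-1 : F)].
    apply/setP => b; rewrite !inE.
    apply/eqP/eqP => [h|->].
      have -> : b ^+ 3 = (1 + 4%:R * b ^+ 3) / 4%:R - 4%:R^-1 by field; rewrite h4.
      by rewrite h mul0r sub0r.
    by field; rewrite h4.
  by rewrite card_preimset // cards1.
rewrite V1E -nsq /Ncount.
transitivity #|(fun x : F => x ^+ 3) @^-1: [set w : F | ~~ is_square (1 + 4%:R * w)]|.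
  by apply: eq_card => b; rewrite !inE.
rewrite card_preimset //.
transitivity #|(fun w : F => 1 + 4%:R * w) @^-1: [set w : F | ~~ is_square w]|.
  by apply: eq_card => b; rewrite !inE.
rewrite card_preimset //.
by move=> x y /addrI /(mulfI h4).
Qed.

Lemma case1a : ~~ is_cube (2%:R : F) -> Vcount F 2 = 0%N.
Proof.
move=> nc; rewrite V2E; apply/eqP; rewrite cards_eq0; apply/eqP/setP => b.
rewrite !inE; apply/negP => /eqP h; move/negP: nc; apply; apply/existsP.
exists (- (2%:R * b)); apply/eqP.
transitivity (2%:R - 2%:R * (1 + 4%:R * b ^+ 3) : F); first by ring.
by rewrite h mulr0 subr0.
Qed.

Lemma case1b : (#|F| %% 3 = 1)%N -> is_cube (2%:R : F) -> Vcount F 2 = 3%N.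
Proof.
move=> hq /existsP [y /eqP y3].
pose c := - (y / 2%:R).
have c3 : 1 + 4%:R * c ^+ 3 = 0.
  transitivity (1 - y ^+ 3 / 2%:R : F); first by rewrite /c; field; rewrite h2.
  by rewrite y3 divff // subrr.
have c0 : c != 0.
  apply/negP => /eqP e; move: c3; rewrite e expr0n /= mulr0 addr0 => /eqP.
  by rewrite oner_eq0.
have dvd3 : (3 %| #|[set: {unit F}]|)%N.
  rewrite card_finField_unit; apply/dvdnP; exists (#|F| %/ 3)%N.
  have := divn_eq #|F| 3; rewrite hq; lia.
have [u _ ou] := pgroup.Cauchy (isT : prime 3) dvd3.
pose w := val u.
have w3 : w ^+ 3 = 1 by rewrite /w -FinRing.val_unitX -ou expg_order FinRing.val_unit1.
have w1 : w != 1.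
  apply/negP => /eqP e.
  have : u = 1%g by apply: val_inj; rewrite FinRing.val_unit1.
  by move=> u1; move: ou; rewrite u1 order1.
have s0 : 1 + w + w ^+ 2 = 0.
  have : (w - 1) * (1 + w + w ^+ 2) = 0.
    by transitivity (w ^+ 3 - 1); [ring | rewrite w3 subrr].
  by move/eqP; rewrite mulf_eq0 subr_eq0 (negPf w1) /= => /eqP.
have w0 : w != 0.
  apply/negP => /eqP e; move: w3; rewrite e expr0n /= => /eqP.
  by rewrite eq_sym oner_eq0.
have w21 : w ^+ 2 != 1.
  apply: contra_neq w1 => e; rewrite -w3 exprS e mulr1 //.
have ww2 : w != w ^+ 2.
  apply: contra_neq w1 => e; apply: (mulfI w0); rewrite mulr1 -expr2 -e //.
rewrite V2E.
have -> : [set b : F | 1 + 4%:R * b ^+ 3 == 0] = [set c; c * w; c * w ^+ 2].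
  apply/setP => b; rewrite !inE.
  have -> : 1 + 4%:R * b ^+ 3 = 4%:R * ((b - c) * (b - c * w) * (b - c * w ^+ 2))
     + 4%:R * c ^+ 3 * (w ^+ 3 - 1) + c * b * (4%:R * b - 4%:R * w * c) * (1 + w + w ^+ 2)
     + (1 + 4%:R * c ^+ 3) by ring.
  rewrite w3 s0 c3 subrr !mulr0 !addr0 mulf_eq0 (negPf h4) /=.
  by rewrite !mulf_eq0 !subr_eq0.
have -> : [set c; c * w; c * w ^+ 2] = c |: [set c * w; c * w ^+ 2].
  by apply/setP => x; rewrite !inE orbA.
rewrite cardsU1 cards2 !inE.
rewrite (inj_eq (mulfI c0)) (negPf ww2).
rewrite -{1 3}(mulr1 c) !(inj_eq (mulfI c0)) ![1 == _]eq_sym (negPf w1) (negPf w21).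
done.
Qed.
End S.

Theorem lemma4p4 (F : finFieldType) (q : nat) (hq : #|F| = q)
  (hodd : odd q) (h5 : (5 <= q)%N) :
  ((q %% 3 = 2)%N -> Vcount F 2 = 1%N /\ Vcount F 1 = ((q - 1) %/ 2)%N) /\
  ((q %% 3 = 1)%N -> ~~ is_cube (2%:R : F) -> Vcount F 2 = 0%N /\ Vcount F 1 = Ncount F) /\
  ((q %% 3 = 1)%N -> is_cube (2%:R : F) -> Vcount F 2 = 3%N /\ Vcount F 1 = Ncount F).
Proof.
subst q.
have h2 : (2%:R : F) != 0.
  apply/negP => e; have := @char_dvd F 2 isT e.
  by rewrite dvdn2 hodd.
have h3 : (#|F| %% 3 != 0)%N -> (3%:R : F) != 0.
  move=> hm; apply/negP => e; have := @char_dvd F 3 isT e.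
  by rewrite /dvdn (negPf hm).
split; [|split].
- move=> hm; apply: case2 => //; apply: h3; by rewrite hm.
- move=> hm nc; have h3' : (3%:R : F) != 0 by apply: h3; rewrite hm.
  by split; [apply: case1a | apply: V1E].
- move=> hm c; have h3' : (3%:R : F) != 0 by apply: h3; rewrite hm.
  by split; [apply: case1b | apply: V1E].
Qed.
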